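(* Let $n\ge 1$ be an integer and $x\in\mathbb{R}$, and let $z_1(x),\ldots,z_n(x)$ be the zeros (listed with multiplicity) of the normalized associated Legendre function $\psi_n(x,z)=\Gamma(1-z)P_n^z(\tanh x)$ with respect to $z$, as defined in the context. Then for each $\ell=1,\ldots,n$, $$\prod_{j=1}^n \bigl(\ell - z_j(x)\bigr) = (-1)^{n-\ell}\, e^{-2\ell x}\prod_{j=1}^n \bigl(\ell + z_j(x)\bigr),$$ i.e. whenever the denominators are nonzero, $$\prod_{j=1}^n \frac{\ell-z_j(x)}{\ell+z_j(x)} = (-1)^{n-\ell}\exp(-2\ell x),\qquad \ell=1,\ldots,n.$$
   Context: Fix an integer $n\ge1$. For $x\in\mathbb{R}$ and $z\in\mathbb{C}\setminus\{1,\ldots,n\}$ define $$\psi_n(x,z)=\frac{e^{zx}}{(1+e^{-2x})^n}\sum_{m=0}^n e^{-2mx}\binom{n}{m}\prod_{j=1}^m\frac{z+n+1-j}{z-j},$$ which equals $\Gamma(1-z)P_n^z(\tanh x)$, where $P_n^z$ is the associated Legendre function of degree $n$ and order $z$ and $\Gamma$ is the Euler gamma function. For each $x$, the polynomial $Q_x(z)=\sum_{m=0}^n e^{-2mx}\binom{n}{m}\prod_{j=1}^m(z+n+1-j)\prod_{k=m+1}^n(z-k)$ has degree $n$ with leading coefficient $(1+e^{-2x})^n$; its roots (with multiplicity) are denoted $z_1(x),\ldots,z_n(x)$, so that $\psi_n(x,z)=\frac{e^{zx}}{(1+e^{-2x})^n}\prod_{j=1}^n\frac{z-z_j(x)}{z-j}$.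 These are called the zeros of $\psi_n(x,\cdot)$. *)

(* Defs.v *)
From mathcomp Require Import all_boot all_algebra.
From mathcomp Require Import complex.
From mathcomp Require Import reals sequences.
Import GRing.Theory Num.Theory.
Local Open Scope ring_scope.
Local Open Scope complex_scope.

Definition Qpoly {R : realType} (n : nat) (x : R) : {poly R[i]} :=
  \sum_(m < n.+1)
     (((expR (- (2 * (m%:R)) * x))%:C * ('C(n, m))%:R) *:
      ((\prod_(1 <= j < m.+1) ('X + ((n.+1 - j)%:R)%:P)) *
       (\prod_(m.+1 <= k < n.+1) ('X - (k%:R)%:P)))).

(* zs lists the zeros z_1(x),...,z_n(x) of psi_n(x,.) (i.e. of Q_x) with
   multiplicity: Q_x = lead_coef Q_x * prod_j (X - z_j). *)
Definition psi_zeros {R : realType} (n : nat) (x : R) (zs : seq R[i]) : Prop :=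
  size zs = n /\
  Qpoly n x = lead_coef (Qpoly n x) *: \prod_(z <- zs) ('X - z%:P).

(* Main.v *)
Require Import Defs.
From mathcomp Require Import all_boot all_algebra.
From mathcomp Require Import complex.
From mathcomp Require Import reals sequences.
Import GRing.Theory Num.Theory.
Local Open Scope ring_scope. Local Open Scope complex_scope.
Local Open Scope complex_scope.
From mathcomp Require Import exp zify ring.
Local Close Scope ring_scope. Local Close Scope complex_scope.
Lemma N1 l n m : m <= n ->
  (\prod_(1 <= j < m.+1) (l + n.+1 - j)) * (l + n - m)`! = (l + n)`!.
Proof.
elim: m => [|m IH] Hm; first by rewrite big_geq // mul1n subn0.
rewrite big_nat_recr //= -mulnA -IH; last lia.
have -> : (l + n - m = (l + n - m.+1).+1)%N by lia.
rewrite factS; congr (_ * _); congr (_ * _); lia.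
Qed.

Lemma N3 l n m : m + l <= n ->
  (\prod_(1 <= j < m.+1) (n.+1 - j - l)) * (n - l - m)`! = (n - l)`!.
Proof.
elim: m => [|m IH] Hm; first by rewrite big_geq // mul1n subn0.
rewrite big_nat_recr //= -mulnA -IH; last lia.
have -> : (n - l - m = (n - l - m.+1).+1)%N by lia.
rewrite factS; congr (_ * _); congr (_ * _); lia.
Qed.

Lemma N2 l m n : l <= m -> m <= n ->
  (\prod_(m.+1 <= k < n.+1) (k - l)) * (m - l)`! = (n - l)`!.
Proof.
move=> Hl; elim: n => [|n IH] Hn.
  have -> : m = 0 by lia. by rewrite big_geq // mul1n.
case: (ltnP m n.+1) => Hmn.
  rewrite big_nat_recr //= mulnAC IH; last lia.
  have -> : (n.+1 - l = (n - l).+1)%N by lia.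
  by rewrite factS mulnC.
have -> : m = n.+1 by lia. by rewrite big_geq // mul1n.
Qed.

Lemma N4 l m n : m <= n ->
  (\prod_(m.+1 <= k < n.+1) (l + k)) * (l + m)`! = (l + n)`!.
Proof.
elim: n => [|n IH] Hn.
  have -> : m = 0 by lia. by rewrite big_geq // mul1n.
case: (ltnP m n.+1) => Hmn.
  rewrite big_nat_recr //= mulnAC IH; last lia.
  by rewrite addnS factS mulnC.
have -> : m = n.+1 by lia. by rewrite big_geq // mul1n.
Qed.
Local Open Scope ring_scope. Local Open Scope complex_scope.
Definition Fl {K : numFieldType} (n m : nat) (c : K) : K :=
  ('C(n, m))%:R * (\prod_(1 <= j < m.+1) (c + (n.+1 - j)%:R)) *
  (\prod_(m.+1 <= k < n.+1) (c - k%:R)).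

Lemma term (K : numFieldType) (n l mp : nat) : (mp + l <= n)%N ->
  Fl n (mp + l) (l%:R : K) = (-1) ^+ l * Fl n mp (- l%:R).
Proof.
move=> H; rewrite /Fl.
set m := (mp + l)%N.
have P1 : \prod_(1 <= j < m.+1) ((l%:R : K) + (n.+1 - j)%:R) =
          (\prod_(1 <= j < m.+1) (l + n.+1 - j))%N%:R.
  rewrite natr_prod; apply: eq_big_nat => j Hj; rewrite -natrD; congr (_%:R); lia.
have P2 : \prod_(m.+1 <= k < n.+1) ((l%:R : K) - k%:R) =
          (-1) ^+ (n - m)%N * (\prod_(m.+1 <= k < n.+1) (k - l))%N%:R.
  rewrite natr_prod -[(n - m)%N]/(n.+1 - m.+1)%N -prodr_const_nat -big_split /=.
  apply: eq_big_nat => k Hk; rewrite natrB; last lia.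
  by rewrite mulN1r opprB.
have P3 : \prod_(1 <= j < mp.+1) (- (l%:R : K) + (n.+1 - j)%:R) =
          (\prod_(1 <= j < mp.+1) (n.+1 - j - l))%N%:R.
  rewrite natr_prod; apply: eq_big_nat => j Hj; idtac.
  rewrite addrC (natrB _ (_ : (l <= n.+1 - j)%N)) //; lia.
have P4 : \prod_(mp.+1 <= k < n.+1) (- (l%:R : K) - k%:R) =
          (-1) ^+ (n - mp)%N * (\prod_(mp.+1 <= k < n.+1) (l + k))%N%:R.
  rewrite natr_prod -[(n - mp)%N]/(n.+1 - mp.+1)%N -prodr_const_nat -big_split /=.
  apply: eq_big_nat => k Hk; rewrite natrD; by rewrite mulN1r opprD.
rewrite P1 P2 P3 P4.
set D := (m`! * (n - m)`! * (n - mp)`! * mp`!)%N.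
have DnZ : (D%:R : K) != 0 by rewrite pnatr_eq0 /D !muln_eq0 !negb_or -!lt0n !fact_gt0.
apply: (mulIf DnZ).
set C := 'C(n, m). set C' := 'C(n, mp).
set p1 := (\prod_(1 <= j < m.+1) (l + n.+1 - j))%N.
set p2 := (\prod_(m.+1 <= k < n.+1) (k - l))%N.
set p3 := (\prod_(1 <= j < mp.+1) (n.+1 - j - l))%N.
set p4 := (\prod_(mp.+1 <= k < n.+1) (l + k))%N.
set N := (n`! * (l + n)`! * (n - l)`!)%N.
have h1 : (C * (m`! * (n - m)`!) = n`!)%N by apply: bin_fact; lia.
have h1' : (C' * (mp`! * (n - mp)`!) = n`!)%N by apply: bin_fact; lia.
have h2 : (p1 * (l + n - m)`! = (l + n)`!)%N by apply: N1; lia.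
have h3 : (p2 * (m - l)`! = (n - l)`!)%N by apply: N2; lia.
have h4 : (p3 * (n - l - mp)`! = (n - l)`!)%N by apply: N3; lia.
have h5 : (p4 * (l + mp)`! = (l + n)`!)%N by apply: N4; lia.
have e1 : (l + n - m = n - mp)%N by rewrite /m; lia.
have e2 : (m - l = mp)%N by rewrite /m; lia.
have e3 : (n - l - mp = n - m)%N by rewrite /m; lia.
have e4 : (l + mp = m)%N by rewrite /m; lia.
rewrite e1 in h2; rewrite e2 in h3; rewrite e3 in h4; rewrite e4 in h5.
have L : (C * p1 * p2 * D = N)%N.
  by rewrite /N /D -h1 -h2 -h3; ring.
have Rr : (C' * p3 * p4 * D = N)%N.
  by rewrite /N /D -h1' -h4 -h5; ring.
have -> : (C%:R : K) * p1%:R * ((-1) ^+ (n - m)%N * p2%:R) * D%:R =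
   (-1) ^+ (n - m)%N * (C * p1 * p2 * D)%N%:R by rewrite !natrM; ring.
have -> : (-1) ^+ l * ((C'%:R : K) * p3%:R * ((-1) ^+ (n - mp)%N * p4%:R)) * D%:R =
   ((-1) ^+ l * (-1) ^+ (n - mp)%N) * (C' * p3 * p4 * D)%N%:R by rewrite !natrM; ring.
rewrite L Rr -exprD; congr (_ * _).
rewrite -signr_odd -[in RHS]signr_odd; congr (_ ^+ _).
have -> : (l + (n - mp) = (n - m) + l + l)%N by rewrite /m; lia.
by rewrite -addnA addnn oddD odd_double addbF.
Qed.

Section Main.
Variables (R : realType) (n : nat) (x : R).
Local Notation ee m := ((expR (- (2 * (m%:R)) * x))%:C : R[i]).

Lemma hornerQ (c : R[i]) :
  (Qpoly n x).[c] = \sum_(m < n.+1) ee m * Fl n m c.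
Proof.
rewrite /Qpoly horner_sum; apply: eq_bigr => m _.
rewrite hornerZ hornerM !horner_prod /Fl !mulrA; congr (_ * _ * _ * _).
  by apply: eq_bigr => j _; rewrite hornerD hornerX hornerC.
by apply: eq_bigr => k _; rewrite hornerD hornerN hornerX hornerC.
Qed.

Lemma zeroA l m : (m < l)%N -> (l <= n)%N -> Fl n m (l%:R : R[i]) = 0.
Proof.
move=> H1 H2; apply/eqP; rewrite /Fl mulf_eq0 prodf_seq_eq0; apply/orP; right.
apply/hasP; exists l; first by rewrite mem_index_iota; lia.
by rewrite subrr eqxx.
Qed.

Lemma zeroB l m : (1 <= l <= n)%N -> (n - l < m)%N -> (m <= n)%N ->
  Fl n m (- (l%:R : R[i])) = 0.
Proof.
move=> H1 H2 H3; apply/eqP; rewrite /Fl -mulrA mulrCA mulf_eq0 prodf_seq_eq0.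
apply/orP; left; apply/hasP; exists (n.+1 - l)%N; first by rewrite mem_index_iota; lia.
rewrite subKn; last lia. by rewrite addNr eqxx.
Qed.

Lemma Qpos l : (1 <= l <= n)%N ->
  (Qpoly n x).[l%:R] = \sum_(0 <= mp < n.+1 - l) ee (mp + l)%N * Fl n (mp + l) l%:R.
Proof.
move=> Hl; rewrite hornerQ -(big_mkord xpredT (fun m => ee m * Fl n m _)) (@big_cat_nat _ _ _ l 0 n.+1) //=; last lia.
rewrite big_nat_cond big1 ?add0r; last first.
  by move=> m /andP[/andP[_ Hm] _]; rewrite zeroA ?mulr0 //; lia.
by rewrite -{1}[l]add0n big_addn.
Qed.

Lemma Qneg l : (1 <= l <= n)%N ->
  (Qpoly n x).[- l%:R] = \sum_(0 <= mp < n.+1 - l) ee mp * Fl n mp (- l%:R).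
Proof.
move=> Hl; rewrite hornerQ -(big_mkord xpredT (fun m => ee m * Fl n m _)) (@big_cat_nat _ _ _ (n.+1 - l) 0 n.+1) //= ?leq_subr //.
rewrite [X in _ + X]big_nat_cond [X in _ + X]big1 ?addr0 //.
by move=> m /andP[/andP[Hm1 Hm] _]; rewrite zeroB ?mulr0 //; lia.
Qed.

Lemma Qsym l : (1 <= l <= n)%N ->
  (Qpoly n x).[l%:R] = (-1) ^+ l * ee l * (Qpoly n x).[- l%:R].
Proof.
move=> Hl; rewrite Qpos // Qneg // mulr_sumr; apply: eq_big_nat => mp Hmp.
rewrite term; last lia.
have -> : ee (mp + l)%N = ee l * ee mp.
  by rewrite -(rmorphM (real_complex R)) -expRD natrD; congr (_%:C); congr expR; ring.
ring.
Qed.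

End Main.

Lemma prod_neg (K : comRingType) (s : seq K) (f : K -> K) :
  \prod_(z <- s) (- f z) = (-1) ^+ size s * \prod_(z <- s) f z.
Proof.
elim: s => [|a s IH]; first by rewrite !big_nil expr0 mul1r.
by rewrite !big_cons IH /= exprS; ring.
Qed.
Theorem proposition1 (R : realType) (n : nat) (x : R) (zs : seq R[i]) :
  (1 <= n)%N -> psi_zeros n x zs ->
  forall l : nat, (1 <= l <= n)%N ->
    \prod_(z <- zs) (l%:R - z) =
    (-1) ^+ (n - l) * (expR (- (2 * l%:R) * x))%:C * \prod_(z <- zs) (l%:R + z).
Proof.
move=> Hn [Hsz hQ] l Hl.
set lc := lead_coef (Qpoly n x).
have ev : forall c : R[i], (Qpoly n x).[c] = lc * \prod_(z <- zs) (c - z).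
  by move=> c; rewrite {1}hQ hornerZ horner_prod; congr (_ * _);
     apply: eq_bigr => z _; rewrite hornerXsubC.
have lcNZ : lc != 0.
  apply/negP => /eqP H0.
  have := ev (n%:R); rewrite H0 mul0r Qpos; last by rewrite leqnn Hn.
  rewrite subSnn big_nat1 add0n /Fl binn mul1r (big_geq (leqnn _)) mulr1.
  move=> /eqP; rewrite mulf_eq0 => /orP [/eqP E|].
    have := expR_gt0 (- (2 * n%:R) * x).
    have : (expR (- (2 * n%:R) * x))%:C = (0:R)%:C by rewrite E.
    by move/complexI => ->; rewrite lt0r eqxx.
  rewrite prodf_seq_eq0 => /hasP [j]; rewrite mem_index_iota => Hj /=.
  by rewrite -natrD pnatr_eq0; lia.
have H1 := Qsym R n x l Hl.
rewrite !ev in H1.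
have Eneg : \prod_(z <- zs) (- (l%:R : R[i]) - z) = (-1) ^+ n * \prod_(z <- zs) (l%:R + z).
  rewrite -Hsz -prod_neg; apply: eq_bigr => z _; by rewrite opprD.
rewrite Eneg in H1.
apply: (mulfI lcNZ); rewrite H1.
have -> : n = ((n - l) + l)%N by lia.
rewrite exprD addnK.
have s2 : (-1) ^+ l * (-1) ^+ l = 1 :> R[i].
  by rewrite -exprD -signr_odd addnn odd_double.
transitivity (((-1) ^+ l * (-1) ^+ l) * (lc * ((-1) ^+ (n - l) * (expR (- (2 * l%:R) * x))%:C * \prod_(z <- zs) (l%:R + z)))); first ring.
by rewrite s2 mul1r.
Qed.
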